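(* Let $l\geq 0$ be an integer. Then $f_2(8l+i)=6l+i$ for every $i$ with $0\leq i\leq 5$, and $f_2(8l+6)=f_2(8l+7)=6l+5$.
   Context: $\Sigma_k=\{0,1,\ldots,k-1\}$. A border of a word $w$ is a non-empty word that is both a proper prefix and a proper suffix of $w$; $w$ is unbordered if it has no border. A border $u$ of $w$ is non-overlapping if $|u|\le |w|/2$. The smallest BP-factorization of a word $w$ is the factorization $w=w_m\cdots w_1w_0w_1\cdots w_m$ ($m\ge 0$) in which, for each $i\ge 1$, $w_i$ is the longest non-overlapping border of $w_i\cdots w_1w_0w_1\cdots w_i$, and $w_0$ is either empty or unbordered (i.e., one repeatedly removes the longest non-overlapping border from both ends until an empty or unbordered central word remains). Its width is $2m+1$ if $w_0$ is non-empty and $2m$ if $w_0$ is empty. $f_k(n)$ denotes the maximum width of the smallest BP-factorization over all length-$n$ words over $\Sigma_k$. *)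

(* Defs.v *)
From mathcomp Require Import all_boot.
Set Implicit Arguments. Unset Strict Implicit. Unset Printing Implicit Defensive.

Section Words.
Variable T : eqType.

Definition is_border (u w : seq T) : bool :=
  [&& 0 < size u, size u < size w, prefix u w & suffix u w].

(* w is unbordered: no border (no word u is a border of w). Borders of w
   have length < size w and are determined by their length, so it suffices
   to range over the prefixes of w. *)
Definition unbordered (w : seq T) : bool :=
  ~~ [exists j : 'I_(size w), is_border (take j w) w].

(* length of the longest non-overlapping border (|u| <= |w|/2); 0 if none *)
Definition lnob (w : seq T) : nat :=
  \max_(j < (size w)./2.+1 | is_border (take j w) w) j.

(* width of the smallest BP-factorization, computed with fuel *)
Fixpoint bp_width_fuel (fuel : nat) (w : seq T) : nat :=
  match fuel with
  | 0 => 0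
  | fuel'.+1 =>
      if w == [::] then 0
      else if unbordered w then 1
      else let j := lnob w in
           (bp_width_fuel fuel' (take (size w - j.*2) (drop j w))).+2
  end.

Definition bp_width (w : seq T) : nat := bp_width_fuel (size w) w.

End Words.

Definition f (k n : nat) : nat :=
  \max_(w : n.-tuple 'I_k) bp_width (tval w).

(* Main.v *)
Require Import Defs.
From mathcomp Require Import all_boot.
From mathcomp Require Import zify.
Set Implicit Arguments. Unset Strict Implicit. Unset Printing Implicit Defensive.


Definition z : 'I_2 := ord0.
Definition o : 'I_2 := Ordinal (isT : 1 < 2).
Notation word := (seq 'I_2).

Definition inner (w : word) j := take (size w - j.*2) (drop j w).

Lemma borderP (w : word) j :
  reflect (0 < j < size w /\ forall i, i < j -> nth z w i = nth z w (size w - j + i))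
          (is_border (take j w) w).
Proof.
rewrite /is_border size_take.
apply: (iffP idP).
- case/and4P => h1 h2 _ h4.
  have hj : j < size w by move: h2; case: (ltnP j (size w)) => //; rewrite ltnn.
  rewrite hj in h1; split; first by rewrite h1 hj.
  move=> i hi; move: h4; rewrite suffixE size_takel ?(ltnW hj) // => /eqP h4.
  by rewrite -(nth_take z hi) -h4 nth_drop.
- case=> /andP [h1 h2] h.
  rewrite h2 h1 h2 prefix_take /= suffixE size_takel ?(ltnW h2) //.
  apply/eqP; apply: (@eq_from_nth _ z).
    rewrite size_drop size_takel ?(ltnW h2) //. set n := size w in h2 *. lia.
  move=> i; rewrite size_drop => hi.
  rewrite nth_drop nth_take; last by set n := size w in hi *; lia.
  by symmetry; apply: h; set n := size w in hi *; lia.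
Qed.

Lemma bordered_of (w : word) j : is_border (take j w) w -> unbordered w = false.
Proof.
move=> hb; have [/andP [_ hj] _] := borderP _ _ hb.
rewrite /unbordered; apply/negbF/existsP; by exists (Ordinal hj).
Qed.

Lemma bordered_ex (w : word) : unbordered w = false -> exists j, is_border (take j w) w.
Proof. by rewrite /unbordered => /negbFE/existsP [j hj]; exists j. Qed.

Lemma lnob_le (w : word) : lnob w <= (size w)./2.
Proof. by apply/bigmax_leqP => j _; rewrite -ltnS. Qed.

Lemma lnob_ge (w : word) j : j <= (size w)./2 -> is_border (take j w) w -> j <= lnob w.
Proof.
move=> hj hb; have hj' : j < (size w)./2.+1 by [].
exact: (@leq_bigmax_cond _ _ (fun i : 'I_ _ => nat_of_ord i) (Ordinal hj')).
Qed.

Lemma lnob_border (w : word) : 0 < lnob w -> is_border (take (lnob w) w) w.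
Proof.
rewrite /lnob; case: (pickP (fun j : 'I_((size w)./2.+1) => is_border (take j w) w)).
- move=> j0 hj0 _.
  have hc : 0 < #|(fun j : 'I_((size w)./2.+1) => is_border (take j w) w)|.
    by apply/card_gt0P; exists j0.
  case: (eq_bigmax_cond (fun i : 'I_ _ => nat_of_ord i) hc) => i0 hi0 ->.
  exact: hi0.
- move=> none; rewrite big1 // => j hj; by rewrite none in hj.
Qed.

Lemma short_border (w : word) k : is_border (take k w) w ->
  exists j, j <= (size w)./2 /\ is_border (take j w) w.
Proof.
elim/ltn_ind: k => k IH hb.
have [/andP [h1 h2] h] := borderP _ _ hb.
case: (leqP k (size w)./2) => hks; first by exists k.
set n := size w in h1 h2 h hks *.
have hn2 : n./2 = n %/ 2 by rewrite divn2.
rewrite hn2 in hks.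
apply: (IH (k + k - n)); first by lia.
apply/borderP; split; first by apply/andP; split; lia.
move=> i hi.
rewrite h; last by lia.
rewrite h; last by lia.
congr nth; lia.
Qed.

Lemma lnob_pos (w : word) : unbordered w = false -> 0 < lnob w.
Proof.
move/bordered_ex => [k hk]; have [j [hj hb]] := short_border hk.
have [/andP [h1 _] _] := borderP _ _ hb.
exact: leq_trans h1 (lnob_ge hj hb).
Qed.

Lemma size_inner (w : word) j : size (inner w j) = size w - j.*2.
Proof. by rewrite /inner size_takel // size_drop; lia. Qed.

Lemma nth_inner (w : word) j i : i < size w - j.*2 -> nth z (inner w j) i = nth z w (j + i).
Proof. by move=> hi; rewrite /inner nth_take // nth_drop. Qed.

Lemma bpS f (w : word) : bp_width_fuel f.+1 w =
  if w == [::] then 0 else if unbordered w then 1 else (bp_width_fuel f (inner w (lnob w))).+2.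
Proof. by []. Qed.

Lemma fuel_irr f1 f2 (w : word) : size w <= f1 -> size w <= f2 ->
  bp_width_fuel f1 w = bp_width_fuel f2 w.
Proof.
elim: f1 f2 w => [|f1 IH] [|f2] w h1 h2.
- by [].
- by move: h1; rewrite leqn0 => /nilP ->.
- by move: h2; rewrite leqn0 => /nilP ->.
rewrite !bpS; case: eqP => // hne; case: ifP => // hb.
have := lnob_pos hb; have := lnob_le w; rewrite -divn2 => ha hb'.
congr (_.+2); apply: IH; rewrite size_inner; lia.
Qed.


Lemma bin3 (a b c : 'I_2) : a != b -> b != c -> a = c.
Proof.
move=> hab hbc; apply: ord_inj.
have ha := ltn_ord a; have hb := ltn_ord b; have hc := ltn_ord c.
have h1 : nat_of_ord a != nat_of_ord b by [].
have h2 : nat_of_ord b != nat_of_ord c by [].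
move: h1 h2 => /eqP h1 /eqP h2.
move: (nat_of_ord a) (nat_of_ord b) (nat_of_ord c) ha hb hc h1 h2 => x y t; lia.
Qed.

Lemma nth_inner1 (w : word) i : i < size w - 2 -> nth z (inner w 1) i = nth z w (1 + i).
Proof. by move=> h; rewrite nth_inner. Qed.

Lemma size_inner1 (w : word) : size (inner w 1) = size w - 2.
Proof. by rewrite size_inner. Qed.

Lemma nth_inner2 (w : word) i : i < size w - 4 -> nth z (inner (inner w 1) 1) i = nth z w (2 + i).
Proof.
move=> h; rewrite nth_inner1 ?size_inner1; last by lia.
by rewrite nth_inner1 ?addnA //; lia.
Qed.

Lemma key (w : word) : lnob w = 1 -> lnob (inner w 1) = 1 ->
  unbordered (inner (inner w 1) 1) = false -> lnob (inner (inner w 1) 1) <> 1.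
Proof.
move=> l1 l2 hb3 l3.
have := lnob_border (w:=w); rewrite l1 => /(_ isT) /borderP [/andP [_ hn1] h1].
have := lnob_border (w:=inner w 1); rewrite l2 => /(_ isT) /borderP [/andP [_ hn2] h2].
have := lnob_border (w:=inner (inner w 1) 1); rewrite l3 => /(_ isT) /borderP [/andP [_ hn3] h3].
move: h2 h3 hn2 hn3; rewrite !size_inner1.
set n := size w in hn1 h1 *.
move=> h2 h3 hn2 hn3.
have e1 : nth z w (n - 1) = nth z w 0 by rewrite (h1 0 isT) addn0.
have e2 : nth z w (n - 2) = nth z w 1.
  have := h2 0 isT; rewrite !nth_inner1; try lia.
  have -> : 1 + (n - 2 - 1 + 0) = n - 2 by lia.
  by move=> <-.
have e3 : nth z w (n - 3) = nth z w 2.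
  have := h3 0 isT; rewrite !nth_inner2; try lia.
  have -> : 2 + (n - 2 - 2 - 1 + 0) = n - 3 by lia.
  by move=> <-.
have n2 : n./2 = n %/ 2 by rewrite divn2.
have hw := lnob_ge (w:=w).
have hu := lnob_ge (w:=inner w 1).
rewrite l1 in hw; rewrite l2 in hu.
case: (eqVneq (nth z w 0) (nth z w 1)) => hab.
  suff : 2 <= 1 by [].
  apply: hw; first by rewrite -/n n2; lia.
  apply/borderP; split; first by apply/andP; split; lia.
  case=> [|[|i]] // _; rewrite -/n.
    by rewrite addn0 e2 hab.
  have -> : n - 2 + 1 = n - 1 by lia.
  by rewrite e1 hab.
case: (eqVneq (nth z w 1) (nth z w 2)) => hbc.
  suff : 2 <= 1 by [].
  apply: hu; first by rewrite size_inner1 -/n -divn2; lia.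
  apply/borderP; split; first by rewrite size_inner1 -/n; apply/andP; split; lia.
  rewrite size_inner1 -/n.
  case=> [|[|i]] // _; rewrite !nth_inner1; try lia.
    have -> : 1 + (n - 2 - 2 + 0) = n - 3 by lia.
    by rewrite e3 hbc.
  have -> : 1 + (n - 2 - 2 + 1) = n - 2 by lia.
  by rewrite e2 hbc.
have hac := bin3 hab hbc.
suff : 3 <= 1 by [].
apply: hw; first by rewrite -/n n2; lia.
apply/borderP; split; first by apply/andP; split; lia.
case=> [|[|[|i]]] // _; rewrite -/n.
- by rewrite addn0 e3 hac.
- have -> : n - 3 + 1 = n - 2 by lia.
  by rewrite e2.
- have -> : n - 3 + 2 = n - 1 by lia.
  by rewrite e1 hac.
Qed.

Definition g n := 6 * (n %/ 8) + minn (n %% 8) 5.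

Lemma g_mono m n : m <= n -> g m <= g n. Proof. rewrite /g; lia. Qed.
Lemma g_ge n k : k <= 5 -> k <= n -> k <= g n. Proof. rewrite /g; lia. Qed.
Lemma g_step4 n : 4 <= n -> 2 + g (n - 4) <= g n. Proof. rewrite /g; lia. Qed.
Lemma g_step6 n : 6 <= n -> 4 + g (n - 6) <= g n. Proof. rewrite /g; lia. Qed.
Lemma g_step8 n : 8 <= n -> 6 + g (n - 8) <= g n. Proof. rewrite /g; lia. Qed.

Lemma nonnil (w : word) : w <> [::] -> 0 < size w.
Proof. by case: w. Qed.

Lemma ub N : forall f (w : word), f <= N -> bp_width_fuel f w <= g (size w).
Proof.
elim: N => [|N IH] [|f] w hf //.
rewrite bpS; case: eqP => [_|hne] //.
have hn := nonnil hne.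
case: ifP => hb1; first by apply: g_ge.
have j1 := lnob_pos hb1; have jle := lnob_le w.
rewrite -divn2 in jle.
case: (ltnP 1 (lnob w)) => hj.
  have := IH f (inner w (lnob w)) hf; rewrite size_inner => h.
  have hm : g (size w - (lnob w).*2) <= g (size w - 4) by apply: g_mono; lia.
  have hs : 2 + g (size w - 4) <= g (size w) by apply: g_step4; lia.
  lia.
have l1 : lnob w = 1 by lia.
rewrite l1.
case: f hf => [|f] hf; first by apply: (@g_ge _ 2); lia.
rewrite bpS; case: eqP => [_|hne2]; first by apply: (@g_ge _ 2); lia.
have hn2 := nonnil hne2; rewrite size_inner1 in hn2.
case: ifP => hb2; first by apply: (@g_ge _ 3); lia.
have j2 := lnob_pos hb2; have jle2 := lnob_le (inner w 1).
rewrite -divn2 size_inner1 in jle2.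
case: (ltnP 1 (lnob (inner w 1))) => hj2.
  have := IH f (inner (inner w 1) (lnob (inner w 1))) (ltnW hf).
  rewrite size_inner size_inner1 => h.
  have hm : g (size w - 2 - (lnob (inner w 1)).*2) <= g (size w - 6) by apply: g_mono; lia.
  have hs : 4 + g (size w - 6) <= g (size w) by apply: g_step6; lia.
  lia.
have l2 : lnob (inner w 1) = 1 by lia.
rewrite l2.
case: f hf => [|f] hf; first by apply: (@g_ge _ 4); lia.
rewrite bpS; case: eqP => [_|hne3]; first by apply: (@g_ge _ 4); lia.
have hn3 := nonnil hne3; rewrite !size_inner1 in hn3.
case: ifP => hb3; first by apply: (@g_ge _ 5); lia.
have j3 := lnob_pos hb3; have jle3 := lnob_le (inner (inner w 1) 1).
rewrite -divn2 !size_inner1 in jle3.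
have hk := key l1 l2 hb3.
have := IH f (inner (inner (inner w 1) 1) (lnob (inner (inner w 1) 1))) (ltnW (ltnW hf)).
rewrite size_inner !size_inner1 => h.
have hm : g (size w - 2 - 2 - (lnob (inner (inner w 1) 1)).*2) <= g (size w - 8).
  by apply: g_mono; lia.
have hs : 6 + g (size w - 8) <= g (size w) by apply: g_step8; lia.
  lia.
Qed.


Lemma nth_catl' (s t : word) i : i < size s -> nth z (s ++ t) i = nth z s i.
Proof. by move=> h; rewrite nth_cat h. Qed.

Lemma nth_catr' (s t : word) i : nth z (s ++ t) (size s + i) = nth z t i.
Proof. by rewrite nth_cat ltnNge leq_addr /= addKn. Qed.

Lemma inner_cat (a u b : word) : size a = size b -> inner (a ++ u ++ b) (size a) = u.
Proof.
move=> hab; rewrite /inner drop_size_cat //.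
have -> : size (a ++ u ++ b) - (size a).*2 = size u.
  rewrite !size_cat -hab; lia.
by rewrite take_size_cat.
Qed.

Definition wrap (u : word) : word := [:: z; o; z; o] ++ u ++ [:: z; o; o; z].
Definition wu1 (u : word) : word := [:: o; z; o] ++ u ++ [:: z; o; o].
Definition wu2 (u : word) : word := [:: z; o] ++ u ++ [:: z; o].

Definition Ainv (u : word) := all (fun t => ~~ [&& nth z (u ++ [:: z; o; o]) t == o,
   nth z (u ++ [:: z; o; o]) t.+1 == z & nth z (u ++ [:: z; o; o]) t.+2 == o])
   (iota (size u - (size u)./2) ((size u)./2).+1).
Definition Binv (u : word) := all (fun t => ~~ [&& nth z (u ++ [:: z; o]) t == z,
   nth z (u ++ [:: z; o]) t.+1 == o & nth z (u ++ [:: z; o]) t.+2 == z])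
   (iota (size u - (size u)./2) (size u)./2).
Definition Hd (u : word) := (size u == 0) || (nth z u 0 == z).

Lemma AinvP u t : Ainv u -> size u - (size u) %/ 2 <= t -> t <= size u ->
  ~~ [&& nth z (u ++ [:: z; o; o]) t == o,
   nth z (u ++ [:: z; o; o]) t.+1 == z & nth z (u ++ [:: z; o; o]) t.+2 == o].
Proof.
move=> /allP h h1 h2; apply: h; rewrite mem_iota -divn2; apply/andP; split => //.
lia.
Qed.

Lemma BinvP u t : Binv u -> size u - (size u) %/ 2 <= t -> t < size u ->
  ~~ [&& nth z (u ++ [:: z; o]) t == z,
   nth z (u ++ [:: z; o]) t.+1 == o & nth z (u ++ [:: z; o]) t.+2 == z].
Proof.
move=> /allP h h1 h2; apply: h; rewrite mem_iota -divn2; apply/andP; split => //.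
lia.
Qed.

Lemma size_wrap u : size (wrap u) = size u + 8.
Proof. rewrite /wrap !size_cat /=; lia. Qed.
Lemma size_wu1 u : size (wu1 u) = size u + 6.
Proof. rewrite /wu1 !size_cat /=; lia. Qed.
Lemma size_wu2 u : size (wu2 u) = size u + 4.
Proof. rewrite /wu2 !size_cat /=; lia. Qed.

Lemma inner_wrap u : inner (wrap u) 1 = wu1 u.
Proof.
have -> : wrap u = [:: z] ++ wu1 u ++ [:: z] by rewrite /wrap /wu1 /= -catA.
exact: (@inner_cat [:: z]).
Qed.
Lemma inner_wu1 u : inner (wu1 u) 1 = wu2 u.
Proof.
have -> : wu1 u = [:: o] ++ wu2 u ++ [:: o] by rewrite /wu1 /wu2 /= -catA.
exact: (@inner_cat [:: o]).
Qed.
Lemma inner_wu2 u : inner (wu2 u) 2 = u.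
Proof. exact: (@inner_cat [:: z; o] u [:: z; o]). Qed.

Lemma wrap_end u j : nth z (wrap u) (size u + 4 + j) = nth z [:: z; o; o; z] j.
Proof.
rewrite /wrap catA.
have -> : size u + 4 + j = size ([:: z; o; z; o] ++ u) + j by rewrite size_cat (addnC (size u) 4).
exact: nth_catr'.
Qed.
Lemma wu1_end u j : nth z (wu1 u) (size u + 3 + j) = nth z [:: z; o; o] j.
Proof.
rewrite /wu1 catA.
have -> : size u + 3 + j = size ([:: o; z; o] ++ u) + j by rewrite size_cat (addnC (size u) 3).
exact: nth_catr'.
Qed.
Lemma wu2_end u j : nth z (wu2 u) (size u + 2 + j) = nth z [:: z; o] j.
Proof.
rewrite /wu2 catA.
have -> : size u + 2 + j = size ([:: z; o] ++ u) + j by rewrite size_cat (addnC (size u) 2).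
exact: nth_catr'.
Qed.

Lemma wrap_E u x : x < size u + 3 -> nth z (wrap u) (4 + x) = nth z (u ++ [:: z; o; o]) x.
Proof.
move=> hx.
have -> : wrap u = [:: z; o; z; o] ++ ((u ++ [:: z; o; o]) ++ [:: z]) by rewrite /wrap -!catA.
rewrite (nth_catr' [:: z; o; z; o]) nth_catl' // size_cat /=; lia.
Qed.
Lemma wu1_E u x : nth z (wu1 u) (3 + x) = nth z (u ++ [:: z; o; o]) x.
Proof. exact: (nth_catr' [:: o; z; o]). Qed.
Lemma wu2_F u x : nth z (wu2 u) (2 + x) = nth z (u ++ [:: z; o]) x.
Proof. exact: (nth_catr' [:: z; o]). Qed.

Lemma lnob_wrap u : Ainv u -> lnob (wrap u) = 1.
Proof.
move=> hA.
have hb1 : is_border (take 1 (wrap u)) (wrap u).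
  apply/borderP; rewrite size_wrap; split; first by apply/andP; split; lia.
  case=> // _; have -> : size u + 8 - 1 + 0 = size u + 4 + 3 by lia.
  by rewrite wrap_end.
apply/eqP; rewrite eqn_leq (lnob_ge _ hb1) ?andbT; last by rewrite size_wrap -divn2; lia.
rewrite leqNgt; apply/negP => hk.
have := lnob_border (ltnW hk); move/borderP => [_ h].
have hle := lnob_le (wrap u); rewrite size_wrap -divn2 in hle h.
move: hk hle h; set k := lnob (wrap u) => hk hle h.
case: (ltnP k 5) => hk5.
  have : k = 2 \/ k = 3 \/ k = 4 by lia.
  case=> [hkv|[hkv|hkv]].
  - have := h 1 ltac:(lia).
    have -> : size u + 8 - k + 1 = size u + 4 + 3 by lia.
    by rewrite wrap_end => /eqP.
  - have := h 0 ltac:(lia).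
    have -> : size u + 8 - k + 0 = size u + 4 + 1 by lia.
    by rewrite wrap_end => /eqP.
  - have := h 3 ltac:(lia).
    have -> : size u + 8 - k + 3 = size u + 4 + 3 by lia.
    by rewrite wrap_end => /eqP.
have hA' := AinvP (t := size u + 5 - k) hA.
have e1 : nth z (u ++ [:: z; o; o]) (size u + 5 - k) = o.
  rewrite -wrap_E; last by lia.
  have -> : 4 + (size u + 5 - k) = size u + 8 - k + 1 by lia.
  by rewrite -h; last by lia.
have e2 : nth z (u ++ [:: z; o; o]) (size u + 5 - k).+1 = z.
  rewrite -wrap_E; last by lia.
  have -> : 4 + (size u + 5 - k).+1 = size u + 8 - k + 2 by lia.
  by rewrite -h; last by lia.
have e3 : nth z (u ++ [:: z; o; o]) (size u + 5 - k).+2 = o.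
  rewrite -wrap_E; last by lia.
  have -> : 4 + (size u + 5 - k).+2 = size u + 8 - k + 3 by lia.
  by rewrite -h; last by lia.
by move: (hA' ltac:(lia) ltac:(lia)); rewrite e1 e2 e3.
Qed.

Lemma lnob_wu1 u : Ainv u -> lnob (wu1 u) = 1.
Proof.
move=> hA.
have hb1 : is_border (take 1 (wu1 u)) (wu1 u).
  apply/borderP; rewrite size_wu1; split; first by apply/andP; split; lia.
  case=> // _; have -> : size u + 6 - 1 + 0 = size u + 3 + 2 by lia.
  by rewrite wu1_end.
apply/eqP; rewrite eqn_leq (lnob_ge _ hb1) ?andbT; last by rewrite size_wu1 -divn2; lia.
rewrite leqNgt; apply/negP => hk.
have := lnob_border (ltnW hk); move/borderP => [_ h].
have hle := lnob_le (wu1 u); rewrite size_wu1 -divn2 in hle h.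
move: hk hle h; set k := lnob (wu1 u) => hk hle h.
case: (ltnP k 3) => hk3.
  have hkv : k = 2 by lia.
  have := h 1 ltac:(lia).
  have -> : size u + 6 - k + 1 = size u + 3 + 2 by lia.
  by rewrite wu1_end => /eqP.
have hA' := AinvP (t := size u + 3 - k) hA.
have e1 : nth z (u ++ [:: z; o; o]) (size u + 3 - k) = o.
  rewrite -wu1_E.
  have -> : 3 + (size u + 3 - k) = size u + 6 - k + 0 by lia.
  by rewrite -h; last by lia.
have e2 : nth z (u ++ [:: z; o; o]) (size u + 3 - k).+1 = z.
  rewrite -wu1_E.
  have -> : 3 + (size u + 3 - k).+1 = size u + 6 - k + 1 by lia.
  by rewrite -h; last by lia.
have e3 : nth z (u ++ [:: z; o; o]) (size u + 3 - k).+2 = o.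
  rewrite -wu1_E.
  have -> : 3 + (size u + 3 - k).+2 = size u + 6 - k + 2 by lia.
  by rewrite -h; last by lia.
by move: (hA' ltac:(lia) ltac:(lia)); rewrite e1 e2 e3.
Qed.

Lemma lnob_wu2 u : Binv u -> Hd u -> lnob (wu2 u) = 2.
Proof.
move=> hB hH.
have hb2 : is_border (take 2 (wu2 u)) (wu2 u).
  apply/borderP; rewrite size_wu2; split; first by apply/andP; split; lia.
  case=> [|[|i]] // _.
    have -> : size u + 4 - 2 + 0 = size u + 2 + 0 by lia.
    by rewrite wu2_end.
  have -> : size u + 4 - 2 + 1 = size u + 2 + 1 by lia.
  by rewrite wu2_end.
apply/eqP; rewrite eqn_leq (lnob_ge _ hb2) ?andbT; last by rewrite size_wu2 -divn2; lia.
rewrite leqNgt; apply/negP => hk.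
have := lnob_border (ltnW (ltnW hk)); move/borderP => [_ h].
have hle := lnob_le (wu2 u); rewrite size_wu2 -divn2 in hle h.
move: hk hle h; set k := lnob (wu2 u) => hk hle h.
have hu0 : nth z u 0 = z.
  move: hH; rewrite /Hd; case: eqP => [?|_ /eqP //]; lia.
have hB' := BinvP (t := size u + 2 - k) hB.
have e1 : nth z (u ++ [:: z; o]) (size u + 2 - k) = z.
  rewrite -wu2_F.
  have -> : 2 + (size u + 2 - k) = size u + 4 - k + 0 by lia.
  by rewrite -h; last by lia.
have e2 : nth z (u ++ [:: z; o]) (size u + 2 - k).+1 = o.
  rewrite -wu2_F.
  have -> : 2 + (size u + 2 - k).+1 = size u + 4 - k + 1 by lia.
  by rewrite -h; last by lia.
have e3 : nth z (u ++ [:: z; o]) (size u + 2 - k).+2 = z.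
  rewrite -wu2_F.
  have -> : 2 + (size u + 2 - k).+2 = size u + 4 - k + 2 by lia.
  rewrite -h; last by lia.
  by rewrite /wu2 /= nth_catl' //; lia.
by move: (hB' ltac:(lia) ltac:(lia)); rewrite e1 e2 e3.
Qed.

Lemma bw_def (w : word) : bp_width w = bp_width_fuel (size w) w.
Proof. by []. Qed.

Lemma width_wrap u : Ainv u -> Binv u -> Hd u -> bp_width (wrap u) = 6 + bp_width u.
Proof.
move=> hA hB hH.
have bW : unbordered (wrap u) = false.
  have := @lnob_border (wrap u); rewrite (lnob_wrap hA) => /(_ isT) hb.
  exact: bordered_of hb.
have b1 : unbordered (wu1 u) = false.
  have := @lnob_border (wu1 u); rewrite (lnob_wu1 hA) => /(_ isT) hb.
  exact: bordered_of hb.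
have b2 : unbordered (wu2 u) = false.
  have := @lnob_border (wu2 u); rewrite (lnob_wu2 hB hH) => /(_ isT) hb.
  exact: bordered_of hb.
rewrite bw_def size_wrap.
have -> : size u + 8 = (size u + 5).+3 by rewrite !addnS.
rewrite bpS bW lnob_wrap // inner_wrap.
rewrite bpS b1 lnob_wu1 // inner_wu1.
rewrite bpS b2 lnob_wu2 // inner_wu2.
rewrite (@fuel_irr _ (size u)) //; lia.
Qed.

Lemma Hd_wrap u : Hd (wrap u).
Proof. by []. Qed.

Lemma Ainv_wrap u : Ainv u -> Ainv (wrap u).
Proof.
move=> hA; apply/allP => t; rewrite mem_iota size_wrap -!divn2 => /andP [ht1 ht2].
have eW : wrap u ++ [:: z; o; o] =
   [:: z; o; z; o] ++ ((u ++ [:: z; o; o]) ++ [:: z; z; o; o]) by rewrite /wrap -!catA.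
rewrite eW.
have -> : t = size [:: z; o; z; o] + (t - 4) by rewrite /=; lia.
rewrite -!addnS !nth_catr'.
case: (leqP (t - 4) (size u)) => ht3.
  rewrite !(@nth_catl' (u ++ [:: z; o; o])) ?size_cat /=; try lia.
  apply: AinvP => //; lia.
rewrite -catA.
have [d [hd1 hd2]] : exists d, t - 4 = size u + d /\ 1 <= d <= 4 by exists (t - 4 - size u); lia.
rewrite hd1 -!addnS !nth_catr'.
by move: hd2; case: d {hd1} => [|[|[|[|[|d]]]]].
Qed.

Lemma Binv_wrap u : Binv u -> Binv (wrap u).
Proof.
move=> hB; apply/allP => t; rewrite mem_iota size_wrap -!divn2 => /andP [ht1 ht2].
have eW : wrap u ++ [:: z; o] =
   [:: z; o; z; o] ++ ((u ++ [:: z; o]) ++ [:: o; z; z; o]) by rewrite /wrap -!catA.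
rewrite eW.
have -> : t = size [:: z; o; z; o] + (t - 4) by rewrite /=; lia.
rewrite -!addnS !nth_catr'.
case: (ltnP (t - 4) (size u)) => ht3.
  rewrite !(@nth_catl' (u ++ [:: z; o])) ?size_cat /=; try lia.
  apply: BinvP => //; lia.
rewrite -catA.
have [d [hd1 hd2]] : exists d, t - 4 = size u + d /\ d <= 3 by exists (t - 4 - size u); lia.
rewrite hd1 -!addnS !nth_catr'.
by move: hd2; case: d {hd1} => [|[|[|[|d]]]].
Qed.


Definition lnobc (w : word) := foldr maxn 0 [seq j <- iota 0 (size w)./2.+1 | is_border (take j w) w].
Definition unbc (w : word) := ~~ has (fun j => is_border (take j w) w) (iota 0 (size w)).

Lemma lnobE w : lnob w = lnobc w.
Proof.
rewrite /lnob /lnobc -(big_mkord (fun j => is_border (take j w) w) (fun j => j)).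
by rewrite -big_filter foldrE.
Qed.

Lemma unbE w : unbordered w = unbc w.
Proof.
rewrite /unbordered /unbc; congr negb.
apply/existsP/hasP => [[j hj]|[j]].
  by exists (val j) => //; rewrite mem_iota /=.
rewrite mem_iota /= => hj hb; by exists (Ordinal hj).
Qed.

Fixpoint bpc (fuel : nat) (w : word) : nat :=
  match fuel with
  | 0 => 0
  | f.+1 => if w == [::] then 0 else if unbc w then 1
            else (bpc f (take (size w - (lnobc w).*2) (drop (lnobc w) w))).+2
  end.

Lemma bpcE f w : bp_width_fuel f w = bpc f w.
Proof.
elim: f w => [|f IH] w //=.
by rewrite unbE lnobE IH.
Qed.

Definition centers : seq word :=
  [:: [::]; [:: z]; [:: z; z]; [:: z; z; z]; [:: z; o; o; z]; [:: z; o; z; o; z];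
      [:: z; o; z; o; o; z]; [:: z; z; o; z; o; z; z]].

Lemma centers_ok i : i < 8 -> let c := nth [::] centers i in
  [/\ size c = i, bp_width c = minn i 5, Ainv c, Binv c & Hd c].
Proof.
move=> hi; rewrite /bp_width bpcE.
by case: i hi => [|[|[|[|[|[|[|[|i]]]]]]]] // _; split; vm_compute.
Qed.

Fixpoint fam (c : word) (l : nat) : word := if l is l'.+1 then wrap (fam c l') else c.

Lemma fam_ok c l : Ainv c -> Binv c -> Hd c ->
  [/\ Ainv (fam c l), Binv (fam c l), Hd (fam c l),
      bp_width (fam c l) = 6 * l + bp_width c & size (fam c l) = 8 * l + size c].
Proof.
move=> hA hB hH; elim: l => [|l [IA IB IH IW IS]]; first by split; rewrite ?mul0n.
rewrite [fam c l.+1]/=.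
split; [exact: Ainv_wrap | exact: Binv_wrap | exact: Hd_wrap | |].
  rewrite width_wrap // IW; lia.
rewrite size_wrap IS; lia.
Qed.

Lemma lb n : exists w : word, size w = n /\ bp_width w = g n.
Proof.
have hi : n %% 8 < 8 by rewrite ltn_mod.
have [s1 w1 A1 B1 H1] := centers_ok hi.
have [_ _ _ W S] := fam_ok (n %/ 8) A1 B1 H1.
exists (fam (nth [::] centers (n %% 8)) (n %/ 8)); split.
  by rewrite S s1; lia.
by rewrite W w1 /g.
Qed.

Lemma f2 n : f 2 n = g n.
Proof.
apply/eqP; rewrite eqn_leq; apply/andP; split.
  apply/bigmax_leqP => t _.
  apply: leq_trans (@ub (size t) (size t) t (leqnn _)) _; by rewrite size_tuple.
have [w [hs hw]] := lb n.
have ht : size w == n by rewrite hs.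
rewrite -hw /f.
exact: (@leq_bigmax _ (fun t : n.-tuple (ordinal 2) => bp_width (tval t)) (Tuple ht)).
Qed.

Theorem theorem6 (l : nat) :
  (forall i : nat, i <= 5 -> f 2 (8 * l + i) = 6 * l + i) /\
  f 2 (8 * l + 6) = 6 * l + 5 /\ f 2 (8 * l + 7) = 6 * l + 5.
Proof.
split; first by move=> i hi; rewrite f2 /g; lia.
by rewrite !f2 /g; split; lia.
Qed.
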